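(* Let $e\ge4$ and let $Q$ be a convex polygon with $e-1$ vertices, one of which is marked as distinguished, the remaining vertices being numbered $2,3,\dots,e-1$ in cyclic order starting next to the distinguished vertex. To a triangulation $\mathcal T$ of $Q$ (a subdivision into triangles by non-crossing diagonals) associate the colouring of $\triangle_{2,e-1}$ in which a dot $(\delta,\varepsilon)$ is black if and only if the vertices $\delta$ and $\varepsilon$ are joined by a diagonal of $\mathcal T$. This assignment is a bijection between the set of triangulations of $Q$ and the set of sparse colourings of $\triangle_{2,e-1}$.
   Context: Dots are pairs of integers $(\alpha,\beta)$. For integers $\delta<\varepsilon$, the triangle $\triangle_{\delta,\varepsilon}$ is the set of dots $(\alpha,\beta)$ with $\delta\le\alpha$, $\beta\le\varepsilon$ and $\beta-\alpha\ge 2$. For a dot $(\alpha,\beta)\in\triangle_{\delta,\varepsilon}$, the sub-triangle $\triangle_{\alpha,\beta}$ is defined by the same rule. A coloured triangle $\triangle_{\delta,\varepsilon}$ is sparse if for every dot $(\alpha,\beta)\in\triangle_{\delta,\varepsilon}$ (including the vertex) the number of black dots in $\triangle_{\alpha,\beta}$ is at most $\beta-\alpha-1$, with equality if and only if $(\alpha,\beta)$ is black. *)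

(* Defs.v *)
From mathcomp Require Import all_boot.
Set Implicit Arguments. Unset Strict Implicit. Unset Printing Implicit Defensive.

Definition npair (e : nat) (p : 'I_e * 'I_e) : nat * nat := (val p.1, val p.2).

Definition tri (e d f : nat) : {set 'I_e * 'I_e} :=
  [set p | [&& d <= val p.1, val p.2 <= f & (val p.1).+2 <= val p.2]].

(* A colouring is given by its set C of black dots. *)
Definition sparse (e d f : nat) (C : {set 'I_e * 'I_e}) : Prop :=
  forall p : 'I_e * 'I_e, p \in tri e d f ->
    #|C :&: tri e (val p.1) (val p.2)| <= val p.2 - val p.1 - 1 /\
    (#|C :&: tri e (val p.1) (val p.2)| = val p.2 - val p.1 - 1 <-> p \in C).

(* Convex polygon with vertices 1, 2, ..., n in cyclic order (vertex 1 the
   distinguished one).  A diagonal is an ordered pair (a,b), a<b, of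
   non-adjacent vertices. *)
Definition is_diag (n : nat) (p : nat * nat) : bool :=
  [&& 1 <= p.1, p.1.+2 <= p.2, p.2 <= n & ~~ ((p.1 == 1) && (p.2 == n))].

(* Two diagonals of a convex polygon cross (in their interiors) iff their
   endpoints interleave. *)
Definition crossing (p q : nat * nat) : bool :=
  [&& p.1 < q.1, q.1 < p.2 & p.2 < q.2] || [&& q.1 < p.1, p.1 < q.2 & q.2 < p.2].

Definition triangulation (e n : nat) (T : {set 'I_e * 'I_e}) : Prop :=
  [/\ forall p, p \in T -> is_diag n (npair p),
      forall p q, p \in T -> q \in T -> ~~ crossing (npair p) (npair q)
    & forall p, is_diag n (npair p) -> p \notin T ->
        exists2 q, q \in T & crossing (npair p) (npair q)].

Definition colouring (e : nat) (T : {set 'I_e * 'I_e}) : {set 'I_e * 'I_e} :=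
  T :&: tri e 2 (e - 1).

(* Main.v *)
Require Import Defs.
From mathcomp Require Import all_boot zify.
Set Implicit Arguments. Unset Strict Implicit. Unset Printing Implicit Defensive.

Lemma triE e d f (p : 'I_e * 'I_e) :
  (p \in tri e d f) = [&& d <= p.1, p.2 <= f & (p.1:nat).+2 <= p.2].
Proof. by rewrite inE. Qed.

Ltac nlia := simpl in *; lia.

Definition ncr e (S : {set 'I_e * 'I_e}) :=
  forall p q, p \in S -> q \in S -> ~~ crossing (npair p) (npair q).

Lemma ncr_sub e (S S' : {set 'I_e * 'I_e}) : S' \subset S -> ncr S -> ncr S'.
Proof. by move=> /subsetP sub h p q /sub hp /sub hq; apply: h. Qed.

Lemma npair_inj e : injective (@npair e).
Proof.
move=> [x1 y1] [x2 y2] [h1 h2]; congr pair; exact: val_inj.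
Qed.

Lemma subP e (A B : {set 'I_e * 'I_e}) :
  (forall p : 'I_e * 'I_e, p \in A -> p \in B) -> A \subset B.
Proof. by move=> h; apply/subsetP. Qed.

Lemma argmin e (R : {set 'I_e * 'I_e}) (F : 'I_e * 'I_e -> nat) p1 :
  p1 \in R -> exists2 p0, p0 \in R & forall q : 'I_e * 'I_e, q \in R -> F p0 <= F q.
Proof.
move=> h; case: (@arg_minnP _ p1 (mem R) F h) => p0 h0 hm.
by exists p0 => // q /hm.
Qed.

Lemma argmax e (R : {set 'I_e * 'I_e}) (F : 'I_e * 'I_e -> nat) p1 :
  p1 \in R -> exists2 p0, p0 \in R & forall q : 'I_e * 'I_e, q \in R -> F q <= F p0.
Proof.
move=> h; case: (@arg_maxnP _ p1 (mem R) F h) => p0 h0 hm.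
by exists p0 => // q /hm.
Qed.

Lemma subE e (A B : {set 'I_e * 'I_e}) (p : 'I_e * 'I_e) :
  A \subset B -> p \in A -> p \in B.
Proof. by move/subsetP; apply. Qed.

Lemma GtoH e a b :
  (forall S : {set 'I_e * 'I_e}, S \subset tri e a b -> ncr S ->
     (forall p, p \in S -> npair p != (a,b)) -> #|S| <= b - a - 2) ->
  forall S : {set 'I_e * 'I_e}, S \subset tri e a b -> ncr S -> #|S| <= b - a - 1.
Proof.
move=> G S sS nS.
case: (boolP [exists p in S, npair p == (a,b)]) => [/existsP [p0 /andP [p0S /eqP hp0]]|].
  have := subE sS p0S; rewrite triE => /and3P [h1 h2 h3].
  rewrite (cardsD1 p0) p0S.
  have : #|S :\ p0| <= b - a - 2.
    apply: G.
    - by apply: subset_trans sS; apply: subsetDl.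
    - by apply: ncr_sub nS; apply: subsetDl.
    - move=> p; rewrite !inE => /andP [pp0 _]; apply/eqP => hp.
      by move/eqP: pp0; apply; apply: npair_inj; rewrite hp hp0.
  move: hp0 h1 h2 h3; rewrite /npair => -[-> ->]; nlia.
rewrite negb_exists => /forallP hn.
have : #|S| <= b - a - 2.
  apply: G => // p pS; have := hn p; by rewrite pS.
nlia.
Qed.

Lemma boundG e n : forall a b (S : {set 'I_e * 'I_e}), b - a <= n ->
  S \subset tri e a b -> ncr S -> (forall p, p \in S -> npair p != (a,b)) ->
  #|S| <= b - a - 2.
Proof.
elim: n => [|n IH] a b S hn sS nS hS.
  suff -> : S = set0 by rewrite cards0.
  apply/setP => p; rewrite inE; apply/negP => pS.
  have := subE sS pS; rewrite triE; nlia.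
have IHH : forall a' b', b' - a' <= n -> forall S' : {set 'I_e * 'I_e},
    S' \subset tri e a' b' -> ncr S' -> #|S'| <= b' - a' - 1.
  by move=> a' b' h; apply: GtoH => S'; apply: IH.
case: (boolP [exists p in S, (p.2 : nat) == b]) => [/existsP [p1 /andP [p1S /eqP hp1]]|].
  pose R := [set p in S | (p.2 : nat) == b].
  have p1R : p1 \in R by rewrite inE p1S hp1 eqxx.
  have [p0 p0R p0min] := argmin (fun p => (p.1 : nat)) p1R.
  have : p0 \in R := p0R. rewrite inE => /andP [p0S /eqP hp0].
  have := subE sS p0S; rewrite triE => /and3P [h1 h2 h3].
  have hx0 : a < p0.1.
    have := hS _ p0S; rewrite /npair /= -hp0 xpair_eqE eqxx andbT; nlia.
  have sub : S \subset (S :&: tri e a p0.1) :|: (S :&: tri e p0.1 b).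
    apply: subP => q qS; have := subE sS qS; rewrite triE => /and3P [k1 k2 k3].
    rewrite !inE qS /=.
       have [k5|k5] : (q.2:nat) = b \/ q.2 < b by nlia.
      have : q \in R by rewrite inE qS k5 eqxx.
      move/p0min => k4; nlia.
    have := nS _ _ qS p0S; rewrite /npair /crossing /= hp0; nlia.
  apply: leq_trans (subset_leq_card sub) _.
  apply: leq_trans (leq_card_setU _ _) _.
  have c1 : #|S :&: tri e a p0.1| <= p0.1 - a - 1.
    apply: IHH; first nlia.
      by apply: subsetIr.
    by apply: ncr_sub nS; apply: subsetIl.
  have c2 : #|S :&: tri e p0.1 b| <= b - p0.1 - 1.
    apply: IHH; first nlia.
      by apply: subsetIr.
    by apply: ncr_sub nS; apply: subsetIl.
  nlia.
rewrite negb_exists => /forallP hn'.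
have sub : S \subset tri e a b.-1.
  apply: subP => q qS; have := subE sS qS; have := hn' q.
  rewrite qS !triE /= => k k'; nlia.
have := IHH a b.-1 ltac:(nlia) S sub nS; nlia.
Qed.

Lemma boundH e a b (S : {set 'I_e * 'I_e}) :
  S \subset tri e a b -> ncr S -> #|S| <= b - a - 1.
Proof. apply: GtoH => S'; exact: (@boundG e (b - a)). Qed.

Lemma lowerL e N n (T : {set 'I_e * 'I_e}) : triangulation N T ->
  forall p, p \in T -> (p.2:nat) - p.1 <= n ->
  (p.2:nat) - p.1 - 1 <= #|T :&: tri e p.1 p.2|.
Proof.
case=> hd hnc hmax.
elim: n => [|n IH] p pT hn.
  have := hd _ pT; rewrite /is_diag /npair /=; nlia.
have := hd _ pT; rewrite /is_diag /npair /= => /and4P [d1 d2 d3 d4].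
have pe : (p.2 : nat) < e := ltn_ord p.2.
pose A := [set q in T | ((q.1 : nat) == p.1) && (q.2 < p.2)].
have [c [F1 F1' F2 F3 F4]] : exists c, [/\ (p.1 : nat) < c, c < p.2,
    c - p.1 - 1 <= #|T :&: tri e p.1 c|,
    forall q, q \in T -> (q.1 : nat) = p.1 -> q.2 < p.2 -> q.2 <= c &
    forall q, q \in T -> (p.1 : nat) < q.1 -> q.1 < c -> q.2 <= c].
  case: (set_0Vmem A) => [A0 | [q1 q1A]].
    exists (p.1).+1; split => //; try nlia.
    move=> q qT hq1 hq2.
    have : q \in A by rewrite inE qT hq1 eqxx hq2.
    by rewrite A0 inE.
  have [qs qsA qsmax] := argmax (fun q => (q.2 : nat)) q1A.
  move: (qsA); rewrite inE => /andP [qsT /andP [/eqP qs1 qs2]].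
  have := hd _ qsT; rewrite /is_diag /npair /= => /and4P [s1 s2 s3 s4].
  exists qs.2; split; try nlia.
  - have := IH qs qsT ltac:(nlia). by rewrite qs1.
  - move=> q qT hq1 hq2.
    have : q \in A by rewrite inE qT hq1 eqxx hq2.
    by move/qsmax.
  - move=> q qT hq1 hq2.
    have := hnc _ _ qsT qT; rewrite /crossing /npair /= qs1; nlia.
have hc : c < e by nlia.
pose P' : 'I_e * 'I_e := (Ordinal hc, p.2).
have G2 : p.2 - c - 1 <= #|T :&: tri e c p.2|.
  have [cb|cb] : c = (p.2).-1 \/ c.+2 <= p.2 by nlia.
    nlia.
  have P'T : P' \in T.
    case: (boolP (P' \in T)) => // nP'.
    have dP' : is_diag N (npair P').
      rewrite /is_diag /npair /=; nlia.
    have [q qT cr] := hmax _ dP' nP'.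
    move: cr; rewrite /crossing /npair /= => cr.
    have := hnc _ _ pT qT; rewrite /crossing /npair /= => cr2.
    have [k|[k|k]] : (q.1 : nat) < p.1 \/ (q.1 : nat) = p.1 \/ (p.1 : nat) < q.1 by nlia.
    - nlia.
    - have := F3 q qT k; nlia.
    - have := F4 q qT k; nlia.
  have := IH P' P'T ltac:(rewrite /=; nlia). by [].
have XY : (T :&: tri e p.1 c) :&: (T :&: tri e c p.2) = set0.
  apply/setP => q; rewrite !inE; apply/negP => /andP [/andP [_ ] /and3P [k1 k2 k3] /andP [_ /and3P [k4 k5 k6]]].
  nlia.
have pXY : p \notin (T :&: tri e p.1 c) :|: (T :&: tri e c p.2) by rewrite !inE; nlia.
have sub : p |: ((T :&: tri e p.1 c) :|: (T :&: tri e c p.2)) \subset T :&: tri e p.1 p.2.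
  apply: subP => q; rewrite !inE => /orP [/eqP ->|]; first by rewrite pT /=; nlia.
  move=> /orP [] /andP [-> k]; nlia.
have := subset_leq_card sub.
rewrite cardsU1 pXY cardsU XY cards0.
move: F2 G2; rewrite /=. nlia.
Qed.

Lemma crossingC a b : crossing a b = crossing b a.
Proof. by rewrite /crossing orbC. Qed.

Lemma ncrT e N (T : {set 'I_e * 'I_e}) : triangulation N T -> ncr T.
Proof. by case. Qed.

Lemma part1 e (T : {set 'I_e * 'I_e}) : 4 <= e -> triangulation (e - 1) T ->
  colouring T \subset tri e 2 (e - 1) /\ sparse 2 (e - 1) (colouring T).
Proof.
move=> he hT; split; first exact: subsetIr.
move=> p ptri.
have ptri' := ptri; rewrite triE in ptri'; case/and3P: ptri' => t1 t2 t3.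
have E : colouring T :&: tri e p.1 p.2 = T :&: tri e p.1 p.2.
  apply/setP => q; rewrite /colouring !inE.
  case: (q \in T) => //=; apply/idP/idP; [by case/andP|] => /and3P [k1 k2 k3].
  rewrite k1 k2 k3 /=; nlia.
rewrite E.
have nT := ncrT hT.
have up : #|T :&: tri e p.1 p.2| <= p.2 - p.1 - 1.
  by apply: boundH; [apply: subsetIr | apply: ncr_sub nT; apply: subsetIl].
split => //.
have pc : (p \in colouring T) = (p \in T) by rewrite /colouring inE ptri andbT.
rewrite pc; split.
  move=> heq; case: (boolP (p \in T)) => // npT.
  have : #|T :&: tri e p.1 p.2| <= p.2 - p.1 - 2.
    apply: (@boundG e (p.2 - p.1)) => //.
    - exact: subsetIr.
    - by apply: ncr_sub nT; apply: subsetIl.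
    - move=> q; rewrite inE => /andP [qT _]; apply/eqP => hq.
      have qp : q = p by apply: npair_inj; rewrite hq.
      by move: npT; rewrite -qp qT.
  nlia.
move=> pT; have := lowerL hT pT (leqnn _); nlia.
Qed.

Definition fanok e (C : {set 'I_e * 'I_e}) (p : 'I_e * 'I_e) :=
  [forall q in C, ~~ (((q.1 : nat) < p.2) && ((p.2 : nat) < q.2))].

Lemma charT e (T : {set 'I_e * 'I_e}) : triangulation (e - 1) T -> forall p,
  p \in T = (p \in colouring T) ||
    [&& (p.1 : nat) == 1, is_diag (e - 1) (npair p) & fanok (colouring T) p].
Proof.
case=> hd hnc hmax p.
case: (boolP (p \in T)) => [pT|npT].
  have := hd _ pT; rewrite /is_diag /npair /= => dp.
  have [k|k] : (p.1 : nat) = 1 \/ 2 <= p.1 by nlia.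
    apply/esym/orP; right; rewrite k eqxx /=.
    apply/andP; split; first by rewrite /is_diag /npair /=; nlia.
    apply/forallP => q; apply/implyP; rewrite /colouring !inE => /andP [qT /and3P [q1 q2 q3]].
    have := hnc _ _ pT qT; rewrite /crossing /npair /=; nlia.
  by apply/esym/orP; left; rewrite /colouring !inE pT /=; nlia.
rewrite /colouring inE (negbTE npT) /=; apply/esym/negP => /and3P [/eqP p1 dp fp].
have [q qT cr] := hmax _ dp npT.
have := hd _ qT; rewrite /is_diag /npair /= => dq.
move: cr; rewrite /crossing /npair /= p1 => cr.
move/forallP: fp => /(_ q) /implyP; rewrite !inE qT /=.
have -> : [&& 2 <= q.1, q.2 <= e - 1 & (q.1 : nat).+2 <= q.2] by nlia.
move=> /(_ isT); nlia.
Qed.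

Lemma part2 e (T1 T2 : {set 'I_e * 'I_e}) :
  triangulation (e - 1) T1 -> triangulation (e - 1) T2 ->
  colouring T1 = colouring T2 -> T1 = T2.
Proof.
move=> h1 h2 hc; apply/setP => p.
by rewrite (charT h1) (charT h2) hc.
Qed.

Lemma sparse_le e (C : {set 'I_e * 'I_e}) (x y : 'I_e) :
  sparse 2 (e - 1) C -> 2 <= x -> (y : nat) <= e - 1 ->
  #|C :&: tri e x y| <= y - x - 1.
Proof.
move=> sp hx hy.
have [k|k] : (x : nat).+2 <= y \/ (y : nat) < x.+2 by nlia.
  have : (x, y) \in tri e 2 (e - 1) by rewrite triE /=; nlia.
  by move/sp => [].
suff -> : C :&: tri e x y = set0 by rewrite cards0.
apply/setP => q; rewrite !inE; apply/negP => /andP [_ /and3P [k1 k2 k3]]; nlia.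
Qed.

Lemma ncr_one e (C : {set 'I_e * 'I_e}) : C \subset tri e 2 (e - 1) ->
  sparse 2 (e - 1) C -> forall P Q : 'I_e * 'I_e, P \in C -> Q \in C ->
  ~~ [&& (P.1 : nat) < Q.1, (Q.1 : nat) < P.2 & (P.2 : nat) < Q.2].
Proof.
move=> sC sp P Q PC QC; apply/negP => /and3P [c1 c2 c3].
have := subE sC PC; rewrite triE => /and3P [p1 p2 p3].
have := subE sC QC; rewrite triE => /and3P [q1 q2 q3].
have PT : P \in tri e 2 (e - 1) by exact: subE sC PC.
have QT : Q \in tri e 2 (e - 1) by exact: subE sC QC.
have [_ hA'] := sp P PT; have hA := proj2 hA' PC.
have [_ hB'] := sp Q QT; have hB := proj2 hB' QC.
pose D : 'I_e * 'I_e := (P.1, Q.2).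
have DT : D \in tri e 2 (e - 1) by rewrite triE /=; nlia.
have [hD _] := sp D DT.
have hI := @sparse_le e C Q.1 P.2 sp ltac:(nlia) ltac:(nlia).
set A := C :&: tri e P.1 P.2.
set B := C :&: tri e Q.1 Q.2.
have sI : A :&: B \subset C :&: tri e Q.1 P.2.
  apply: subP => q; rewrite !inE => /andP [/andP [-> /and3P [k1 k2 k3]] /andP [_ /and3P [k4 k5 k6]]].
  rewrite /=; nlia.
have sIA : A :&: B \subset A by apply: subsetIl.
have nD : D \notin A :|: B by rewrite !inE /=; clear -c1 c3; nlia.
have sU0 : A :|: B \subset C :&: tri e D.1 D.2.
  apply: subP => q; rewrite !inE /= => /orP [] /andP [-> k]; move: k; clear -c1 c2 c3 p3 q3; nlia.
have cU : #|A :|: B| = #|A| + #|B| - #|A :&: B| by rewrite cardsU.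
have l1 := subset_leq_card sI.
have l2 := subset_leq_card sIA.
have l3 := subset_leq_card sU0.
have DC : D \in C.
  have [_ hD'] := sp D DT; apply hD'.
  rewrite -/A -/B in hA hB; move: hD; rewrite /= => hD.
  clear -hD hA hB l1 l2 l3 cU hI c1 c2 c3 p3 q3; nlia.
have sU : D |: (A :|: B) \subset C :&: tri e D.1 D.2.
  apply: subP => q; rewrite in_setU1 => /orP [/eqP ->|qU]; last exact: subE sU0 qU.
  by rewrite inE DC /= triE /= !leqnn /=; clear -p3 c2 c3; nlia.
have := subset_leq_card sU; rewrite cardsU1 nD.
rewrite -/A -/B in hA hB; move: hD; rewrite /= => hD l4.
clear -hD hA hB l1 l2 l3 l4 cU hI c1 c2 c3 p3 q3. simpl in *. set n1 := #|A :&: B| in cU l1 l2 *. set n2 := #|A :|: B| in cU l3 l4 *. set n3 := #|A| in hA cU l2 *. set n4 := #|B| in hB cU *. set n5 := #|C :&: tri e P.1 Q.2| in l3 l4 hD *. set n6 := #|C :&: tri e Q.1 P.2| in l1 hI *. clearbody n1 n2 n3 n4 n5 n6. lia. Qed.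

Lemma ncrC e (C : {set 'I_e * 'I_e}) : C \subset tri e 2 (e - 1) ->
  sparse 2 (e - 1) C -> ncr C.
Proof.
move=> sC sp P Q PC QC; rewrite /crossing /npair /=; apply/negP => /orP [h|h].
  by move: (ncr_one sC sp PC QC); rewrite h.
by move: (ncr_one sC sp QC PC); rewrite h.
Qed.

Lemma part3 e (C : {set 'I_e * 'I_e}) : 4 <= e -> C \subset tri e 2 (e - 1) ->
  sparse 2 (e - 1) C -> exists2 T, triangulation (e - 1) T & colouring T = C.
Proof.
move=> he sC sp.
have nC := ncrC sC sp.
pose F := [set p : 'I_e * 'I_e | [&& (p.1 : nat) == 1, is_diag (e - 1) (npair p) & fanok C p]].
exists (C :|: F); last first.
  apply/setP => q; rewrite /colouring !inE.
  case qC: (q \in C) => /=.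
    by have := subE sC qC; rewrite triE.
  apply/negP => /andP [/and3P [/eqP h _ _] /and3P [k _ _]]; nlia.
split.
- move=> p; rewrite !inE => /orP [pC|/and3P [_ d _]] //.
  have := subE sC pC; rewrite triE /is_diag /npair /=; nlia.
- move=> p q; rewrite !inE => /orP [pC|/and3P [/eqP p1 dp fp]] /orP [qC|/and3P [/eqP q1 dq fq]].
  + exact: nC.
  + have := subE sC pC; rewrite triE => hp.
    move/forallP: fq => /(_ p); rewrite pC /=.
    rewrite /crossing /npair /= q1; nlia.
  + have := subE sC qC; rewrite triE => hq.
    move/forallP: fp => /(_ q); rewrite qC /=.
    rewrite /crossing /npair /= p1; nlia.
  + rewrite /crossing /npair /= p1 q1; nlia.
move=> p dp npT.
case: (boolP [exists q in C :|: F, crossing (npair p) (npair q)]) => [/existsP [q /andP [qT cr]]|].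
  by exists q.
rewrite negb_exists => /forallP hno.
have hno' : forall q, q \in C :|: F -> ~~ crossing (npair p) (npair q).
  by move=> q qT; move: (hno q); rewrite qT.
exfalso.
move: npT; rewrite in_setU negb_or => /andP [npC npF].
have dp' := dp; move: dp'; rewrite /is_diag /npair /= => dp'.
have pe : (p.2 : nat) < e := ltn_ord p.2.
have [p1|p1] : (p.1 : nat) = 1 \/ 2 <= p.1 by nlia.
  move: npF; rewrite inE p1 eqxx dp /= /fanok negb_forall => /existsP [q].
  rewrite negb_imply negbK => /andP [qC hq].
  have := hno' q; rewrite inE qC => /(_ isT).
  have := subE sC qC; rewrite triE.
  rewrite /crossing /npair /= p1; nlia.
have cov : forall w, (p.1 : nat) < w -> w < p.2 ->
    exists2 q : 'I_e * 'I_e, q \in C & ((q.1 : nat) < w) && (w < q.2).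
  move=> w h1 h2.
  have hw : w < e by nlia.
  have h1e : 1 < e by nlia.
  pose Fw : 'I_e * 'I_e := (Ordinal h1e, Ordinal hw).
  case: (boolP (fanok C Fw)) => [fo|].
    have FwT : Fw \in C :|: F.
      rewrite in_setU; apply/orP; right; rewrite inE /= fo andbT.
      rewrite /is_diag /npair /=; nlia.
    move: (hno' _ FwT); rewrite /crossing /npair /=; nlia.
  rewrite /fanok negb_forall => /existsP [q]; rewrite negb_imply negbK => /andP [qC hq].
  by exists q.
have ptri : p \in tri e 2 (e - 1) by rewrite triE; nlia.
case: (boolP [exists Q in C, ((Q.1 : nat) <= p.1) && ((p.2 : nat) <= Q.2)]).
  move=> /existsP [Q /andP [QC /andP [k1 k2]]].
  have QT := subE sC QC.
  have [_ hQ'] := sp Q QT; have hQ := proj2 hQ' QC.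
  have sS : p |: (C :&: tri e Q.1 Q.2) \subset tri e Q.1 Q.2.
    apply: subP => q; rewrite in_setU1 => /orP [/eqP ->|]; first by rewrite triE; nlia.
    by rewrite inE => /andP [].
  have nS : ncr (p |: (C :&: tri e Q.1 Q.2)).
    move=> x y; rewrite !in_setU1 => /orP [/eqP ->|/setIP [xC _]] /orP [/eqP ->|/setIP [yC _]].
    - rewrite /crossing /npair /=; nlia.
    - by apply: hno'; rewrite inE yC.
    - by rewrite crossingC; apply: hno'; rewrite inE xC.
    - exact: nC.
  have := boundH sS nS.
  have pn : p \notin C :&: tri e Q.1 Q.2 by rewrite inE (negbTE npC).
  rewrite cardsU1 pn.
  set n1 := #|C :&: tri e Q.1 Q.2| in hQ *. clearbody n1. move: hQ; rewrite /= => hQ; clear -hQ; nlia.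
rewrite negb_exists => /forallP hnc.
have inside : forall (q : 'I_e * 'I_e) w, q \in C -> (q.1 : nat) < w -> w < q.2 ->
    (p.1 : nat) < w -> w < p.2 ->
    [/\ (p.1 : nat) <= q.1, (q.2 : nat) <= p.2 & ~~ (((q.1 : nat) == p.1) && ((q.2 : nat) == p.2))].
  move=> q w qC a1 a2 a3 a4.
  have := hnc q; rewrite qC /= => hc.
  have := hno' q; rewrite inE qC => /(_ isT).
  rewrite /crossing /npair /= => hx.
  split; nlia.
pose B := [set q in C | ((q.1 : nat) == p.1) && (q.2 < p.2)].
have [q0 q0C /andP [h01 h02]] := cov (p.1).+1 (leqnn _) ltac:(nlia).
have [i1 i2 i3] := inside q0 _ q0C h01 h02 (leqnn _) ltac:(nlia).
have q0B : q0 \in B by rewrite inE q0C /=; nlia.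
have [qs qsB qsmax] := argmax (fun q => (q.2 : nat)) q0B.
move: (qsB); rewrite inE => /andP [qsC /andP [/eqP qs1 qs2]].
have := subE sC qsC; rewrite triE => /and3P [s1 s2 s3].
have [q' q'C /andP [h1 h2]] := cov qs.2 ltac:(clear -qs1 s3; nlia) qs2.
have [j1 j2 j3] := inside q' _ q'C h1 h2 ltac:(clear -qs1 s3; nlia) qs2.
have [k|k] : (q'.1 : nat) = p.1 \/ (p.1 : nat) < q'.1 by clear -j1; nlia.
  have : q' \in B by rewrite inE q'C /=; clear -k j2 j3; nlia.
  move/qsmax => /=; clear -h2; nlia.
have := nC _ _ qsC q'C; rewrite /crossing /npair /=; clear -qs1 k h1 h2; nlia.
Qed.

Theorem mainTheorem3 (e : nat) (he : 4 <= e) :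
  [/\ (forall T : {set 'I_e * 'I_e}, triangulation (e - 1) T ->
         colouring T \subset tri e 2 (e - 1) /\ sparse 2 (e - 1) (colouring T)),
      (forall T1 T2 : {set 'I_e * 'I_e},
         triangulation (e - 1) T1 -> triangulation (e - 1) T2 ->
         colouring T1 = colouring T2 -> T1 = T2)
    & (forall C : {set 'I_e * 'I_e},
         C \subset tri e 2 (e - 1) -> sparse 2 (e - 1) C ->
         exists2 T, triangulation (e - 1) T & colouring T = C)].
Proof.
split.
- by move=> T; apply: part1.
- exact: part2.
- by move=> C; apply: part3.
Qed.
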